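(* There exists a deterministic Guesser (using no randomness at all) with $\log^2 n + \log n$ bits of memory whose expected number of correct guesses, when playing the card guessing game against the random-shuffle Dealer, is at least $\frac12 \log n$.
   Context: Card guessing game: a deck consists of $n$ distinct cards labeled $1,\dots,n$ and the game lasts $n$ turns. In each turn the Dealer selects a card from the cards still in the deck and places it face down; the Guesser then names a card of $[n]$ (her guess); the card is revealed and discarded from the deck. A guess is correct if it equals the drawn card; the score is the number of correct guesses. A Guesser with $m$ bits of memory keeps a memory state in $\{0,1\}^m$ between turns and consists of a guessing function (mapping the memory state to a guess) and a state-transition function (mapping the memory state and the revealed card to a new memory state). The random-shuffle Dealer arranges the deck according to a uniformly random permutation and draws the cards in that order. Logarithms $\log$ are base 2. *)

(* Defs.v *)
From HB Require Import structures.
From mathcomp Require Import all_boot all_order all_fingroup all_algebra.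
From mathcomp Require Import all_classical all_reals exp.
Set Implicit Arguments. Unset Strict Implicit. Unset Printing Implicit Defensive.
Import Order.TTheory GRing.Theory Num.Theory.
Local Open Scope ring_scope.

Definition log2 {R : realType} (x : R) : R := ln x / ln 2.

Definition mstate (m : nat) := {ffun 'I_m -> bool}.

(* A deterministic Guesser with m bits of memory for the n-card game:
   an initial memory state, a guessing function and a state-transition
   function. Cards 1..n are represented by 'I_n. *)
Record guesser (n m : nat) := Guesser {
  g_init  : mstate m;
  g_guess : mstate m -> 'I_n;
  g_trans : mstate m -> 'I_n -> mstate m
}.

Fixpoint play_score (n m : nat) (G : guesser n m) (s : mstate m)
    (cards : seq 'I_n) : nat :=
  match cards with
  | [::] => 0%N
  | c :: cs => ((g_guess G s == c) + play_score G (g_trans G s c) cs)%N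
  end.

Definition score (n m : nat) (G : guesser n m) (sigma : {perm 'I_n}) : nat :=
  play_score G (g_init G) [seq sigma i | i <- enum 'I_n].

Definition expected_score {R : realType} (n m : nat) (G : guesser n m) : R :=
  (\sum_(sigma : {perm 'I_n}) (score G sigma)%:R) / (#|{perm 'I_n}|)%:R.

(* Main.v *)
Require Import Defs.
From HB Require Import structures.
From mathcomp Require Import all_boot all_order all_fingroup all_algebra.
From mathcomp Require Import all_classical all_reals exp.
From mathcomp Require Import zify ring lra.
Set Implicit Arguments. Unset Strict Implicit. Unset Printing Implicit Defensive.
Import Order.TTheory GRing.Theory Num.Theory.


Lemma prod_pow2 L : (\prod_(x < L) (2 ^ x.+1 * 2 ^ x.+1) = 2 ^ (L * L.+1))%N.
Proof.
elim: L => [|L IH]; first by rewrite big_ord0.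
rewrite big_ord_recr /= IH -!expnD; congr (2 ^ _); nia.
Qed.

Section Enc.
Variables (A B : finType) (H : #|A| = #|B|).
Definition encf (a : A) : B := enum_val (cast_ord H (enum_rank a)).
Definition decf (b : B) : A := enum_val (cast_ord (esym H) (enum_rank b)).
Lemma encK : cancel encf decf.
Proof. by move=> a; rewrite /encf /decf enum_valK cast_ordK enum_rankK. Qed.
End Enc.

Lemma card_AT_gen L : #|{dffun forall i : 'I_L, ('I_(2 ^ i.+1) * 'I_(2 ^ i.+1))%type}| = #|mstate (L * L.+1)|.
Proof.
rewrite card_dep_ffun /mstate card_ffun card_bool card_ord -prod_pow2.
rewrite foldrE big_map big_enum /=.
by apply: eq_bigr => i _; rewrite card_prod !card_ord.
Qed.

Section Machine.
Variable n : nat.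
Hypothesis hn : (0 < n)%N.

Definition LL := trunc_log 2 n.
Definition Sj (j : nat) : {set 'I_n} := [set c : 'I_n | (c < 2 ^ j)%N].
Definition lev (c : nat) := (trunc_log 2 c).+1.

Definition AT := {dffun forall i : 'I_LL, ('I_(2 ^ i.+1) * 'I_(2 ^ i.+1))%type}.

Lemma exp_pos i : (0 < 2 ^ i.+1)%N.
Proof. by rewrite expn_gt0. Qed.

Definition ordm (i : nat) (x : nat) : 'I_(2 ^ i.+1) := Ordinal (ltn_pmod x (exp_pos i)).

Definition phi (X : {set 'I_n}) : AT :=
  [ffun i : 'I_LL => (ordm i #|X :&: Sj i.+1|, ordm i (\sum_(x in X :&: Sj i.+1) (val x)))].

Definition Tr (a : AT) (c : 'I_n) : AT :=
  [ffun i : 'I_LL => if (c < 2 ^ i.+1)%N then (ordm i (a i).1.+1, ordm i ((a i).2 + c)) else a i].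

Lemma Tr_phi (X : {set 'I_n}) (c : 'I_n) : c \notin X -> Tr (phi X) c = phi (c |: X).
Proof.
move=> cX; apply/ffunP => i; rewrite !ffunE /=.
have hS : (c |: X) :&: Sj i.+1 = if (c < 2 ^ i.+1)%N then c |: (X :&: Sj i.+1) else X :&: Sj i.+1.
  apply/setP => x; rewrite !inE; case: ifP => h; rewrite !inE.
    by case: (eqVneq x c) => [->|] //=; rewrite h andbT.
  by case: (eqVneq x c) => [->|] //=; rewrite h andbF.
rewrite hS; case: ifP => h.
  have cX' : c \notin X :&: Sj i.+1 by rewrite inE (negbTE cX).
  rewrite cardsU1 cX' big_setU1 //=; congr pair; apply: val_inj => /=.
    by rewrite -addn1 modnDml addnC.
  by rewrite modnDml addnC.
by [].
Qed.

Lemma card_Sj j : (2 ^ j <= n)%N -> #|Sj j| = 2 ^ j.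
Proof.
move=> h.
have -> : Sj j = [set widen_ord h k | k : 'I_(2 ^ j)].
  apply/setP => x; rewrite !inE; apply/idP/imsetP => [xl|[k _ ->]] /=.
    by exists (Ordinal xl) => //; apply: val_inj.
  exact: ltn_ord.
by rewrite card_imset ?card_ord // => a b /(congr1 val) /= /val_inj.
Qed.

Lemma pow_LL : (2 ^ LL <= n)%N.
Proof. exact: trunc_logP. Qed.

Lemma pow_i (i : 'I_LL) : (2 ^ i.+1 <= n)%N.
Proof. apply: leq_trans pow_LL; rewrite leq_exp2l //; exact: ltn_ord. Qed.

Definition Tsum j := \sum_(x in Sj j) (val x).
Definition value (a : AT) (i : 'I_LL) : nat := (Tsum i.+1 + 2 ^ i.+1 - (a i).2) %% 2 ^ i.+1.
Definition Pi (a : AT) (i : 'I_LL) := (val (a i).1 == (2 ^ i.+1).-1).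

Lemma value_ok (X : {set 'I_n}) (i : 'I_LL) : Pi (phi X) i ->
  exists u : 'I_n, Sj i.+1 :\: X = [set u] /\ value (phi X) i = u.
Proof.
rewrite /Pi /value !ffunE /=.
set M := 2 ^ i.+1; set S := Sj i.+1.
have hM : #|S| = M by rewrite card_Sj // pow_i.
have M2 : (2 <= M)%N by rewrite /M expnS leq_pmulr ?expn_gt0.
move=> /eqP hc.
have le : (#|X :&: S| <= M)%N by rewrite -hM finset.setIC subset_leq_card ?subsetIl.
have eqc : #|X :&: S| = M.-1.
  move: hc le; rewrite leq_eqVlt => hc /orP[/eqP e|lt].
    by move: hc; rewrite e modnn => h0; lia.
  by move: hc; rewrite modn_small.
have c1 : #|S :\: X| = 1.
  have := cardsID X S; rewrite finset.setIC eqc hM => h.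
  lia.
have [u hu] := cards1P (introT eqP c1).
exists u; split => //.
have uS : u \in S.
  have : u \in S :\: X by rewrite hu set11.
  by rewrite inE => /andP[].
have uM : (u < M)%N by move: uS; rewrite inE.
have hT : Tsum i.+1 = (\sum_(x in X :&: S) val x) + u.
  rewrite /Tsum (big_setID X) /= finset.setIC hu big_set1 //.
set s := \sum_(x in X :&: S) val x.
rewrite hT.
have e := divn_eq s M.
have -> : s + u + M - s %% M = u + (s %/ M).+1 * M by rewrite mulSn; lia.
by rewrite addnC modnMDl modn_small.
Qed.

Definition c0 : 'I_n := Ordinal hn.
Definition Gst (a : AT) : 'I_n :=
  if [pick i | Pi a i && [forall i' : 'I_LL, (i' < i)%N ==> ~~ Pi a i']] is Some i
  then insubd c0 (value a i) else c0.

Lemma Gst_cert (X : {set 'I_n}) (c : 'I_n) : c \notin X -> (lev c <= LL)%N ->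
  Sj (lev c) :\ c \subset X -> Gst (phi X) = c.
Proof.
rewrite /lev => cX.
set J := trunc_log 2 c => JL sub.
have cS : c \in Sj J.+1 by rewrite inE trunc_log_ltn.
pose iJ : 'I_LL := Ordinal JL.
have PJ : Pi (phi X) iJ.
  rewrite /Pi ffunE /=.
  have -> : X :&: Sj J.+1 = Sj J.+1 :\ c.
    apply/setP => x; rewrite !inE; case: (eqVneq x c) => [->|xc] /=.
      by rewrite (negbTE cX).
    case xS: (x < 2 ^ J.+1)%N; rewrite ?andbT ?andbF //.
    by apply: (fintype.subsetP sub); rewrite !inE xc xS.
  have := cardsD1 c (Sj J.+1); rewrite cS card_Sj; last first.
    apply: leq_trans pow_LL; rewrite leq_exp2l //.
  rewrite /= ; move: (2 ^ J.+1) => M h; rewrite modn_small; last by rewrite h add1n ltnSn.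
  by rewrite h add1n.
rewrite /Gst; case: pickP => [i /andP[Pi_i /forallP mn]|none].
  have iJ_le : (i <= J)%N.
    rewrite leqNgt; apply/negP => lt.
    by move: (mn iJ); rewrite lt /= PJ.
  have [u [hu ->]] := value_ok Pi_i.
  have uS : u \in Sj i.+1 :\: X by rewrite hu set11.
  move: uS; rewrite !inE => /andP[uX ui].
  have uJ : (u < 2 ^ J.+1)%N.
    apply: leq_trans ui _; rewrite leq_exp2l //.
  case: (eqVneq u c) => [->|uc]; first by rewrite valKd.
  have : u \in X by apply: (fintype.subsetP sub); rewrite !inE uc uJ.
  by rewrite (negbTE uX).
have [k Pk kmin] := arg_minnP (fun i : 'I_LL => val i) PJ.
move: (none k); rewrite Pk /=.
move/negbT/negP => []; apply/forallP => i'; apply/implyP => lt.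
apply/negP => Pi'; move: (kmin i' Pi'); rewrite leqNgt lt //.
Qed.

Definition mm := (LL * LL.+1)%N.
Definition cardAT : #|AT| = #|mstate mm| := card_AT_gen LL.
Definition Gs : guesser n mm :=
  Guesser (encf cardAT (phi finset.set0)) (fun s => Gst (decf cardAT s))
          (fun s c => encf cardAT (Tr (decf cardAT s) c)).

Definition ok (X : {set 'I_n}) (c : 'I_n) : bool :=
  (lev c <= LL)%N && (Sj (lev c) :\ c \subset X).

Fixpoint certn (X : {set 'I_n}) (cs : seq 'I_n) : nat :=
  match cs with
  | [::] => 0%N
  | c :: cs' => (ok X c + certn (c |: X) cs')%N
  end.

Lemma play_lb (cs : seq 'I_n) (X : {set 'I_n}) : uniq cs -> all (fun c => c \notin X) cs ->
  (certn X cs <= @play_score n mm Gs (encf cardAT (phi X)) cs)%N.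
Proof.
elim: cs X => [|c cs IH] X //= /andP[ccs ucs] /andP[cX acs].
rewrite encK Tr_phi //; apply: leq_add.
  case okc: (ok X c) => //; move: okc => /andP[h1 h2].
  by rewrite (Gst_cert cX h1 h2) eqxx.
have acs' : all (fun x => x \notin c |: X) cs.
  apply/allP => x xcs; rewrite !inE negb_or.
  have -> : x != c by apply: contraNneq ccs => <-.
  by rewrite (allP acs).
exact: (IH (c |: X) ucs acs').
Qed.

Lemma certn_sum (X : {set 'I_n}) (cs : seq 'I_n) :
  certn X cs = (\sum_(0 <= k < size cs) ok (X :|: [set x in take k cs]) (nth c0 cs k))%N.
Proof.
elim: cs X => [|c cs IH] X /=; first by rewrite big_nil.
rewrite big_nat_recl //= IH; congr (_ + _)%N.
  congr ok; apply/setP => x; rewrite !inE; by rewrite orbF.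
apply: eq_bigr => k _; congr ok; apply/setP => x; rewrite !inE.
by rewrite orbA [(_ == c) || _]orbC.
Qed.

Definition islast (S : {set 'I_n}) (s : {perm 'I_n}) (c : 'I_n) : bool :=
  [forall d in S, ((s^-1)%g d <= (s^-1)%g c)%N].
Definition okc (s : {perm 'I_n}) (c : 'I_n) : bool :=
  (lev c <= LL)%N && islast (Sj (lev c)) s c.

Lemma mem_take_enum (k : nat) (y : 'I_n) : (y \in take k (enum 'I_n)) = (y < k)%N.
Proof.
rewrite -(mem_map val_inj) map_take val_enum_ord take_iota mem_iota /= add0n.
by rewrite leq_min ltn_ord andbT.
Qed.

Lemma certn_perm (s : {perm 'I_n}) :
  certn finset.set0 [seq s i | i <- enum 'I_n] = (\sum_(c : 'I_n) okc s c)%N.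
Proof.
rewrite certn_sum size_map size_enum_ord big_mkord.
rewrite [in RHS](reindex_inj (@perm_inj _ s)) /=.
apply: eq_bigr => k _.
rewrite (nth_map c0) ?size_enum_ord // nth_ord_enum.
rewrite /ok /okc /islast; congr andb.
have cS : s k \in Sj (lev (s k)) by rewrite inE trunc_log_ltn.
apply/idP/forall_inP => [sub d dS|h].
  case: (eqVneq d (s k)) => [->//|dk].
  have : d \in finset.set0 :|: [set x in take k [seq s i | i <- enum 'I_n]].
    by apply: (fintype.subsetP sub); rewrite !inE dk; move: dS; rewrite inE.
  rewrite !inE -map_take => /mapP[y]; rewrite mem_take_enum => yk ->.
  by rewrite !permK ltnW.
apply/fintype.subsetP => d; rewrite !inE => /andP[dk dS].
have := h d; rewrite inE dS => /(_ isT); rewrite permK leq_eqVlt => /orP[/eqP e|lt].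
  have e2 : (s^-1)%g d = k by apply: val_inj.
  by move: dk; rewrite -e2 permKV eqxx.
rewrite -map_take; apply/mapP; exists ((s^-1)%g d); last by rewrite permKV.
by rewrite mem_take_enum.
Qed.

Lemma islast_tperm (S : {set 'I_n}) (a b : 'I_n) (s : {perm 'I_n}) :
  a \in S -> b \in S -> islast S (s * tperm a b)%g a = islast S s b.
Proof.
move=> aS bS.
have tS d : (tperm a b d \in S) = (d \in S).
  by case: tpermP => [->|->|] //; rewrite ?aS ?bS.
have inv d : ((s * tperm a b)^-1)%g d = (s^-1)%g (tperm a b d).
  by rewrite invgM tpermV permM.
rewrite /islast inv tpermL.
apply/forall_inP/forall_inP => h d dS.
  by move: (h (tperm a b d)); rewrite tS inv tpermK => /(_ dS).
by rewrite inv; apply: h; rewrite tS.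
Qed.

Lemma islast_same (S : {set 'I_n}) (a b : 'I_n) : a \in S -> b \in S ->
  (\sum_(s : {perm 'I_n}) islast S s a = \sum_(s : {perm 'I_n}) islast S s b)%N.
Proof.
move=> aS bS.
rewrite (reindex_inj (mulIg (tperm a b))) /=.
by apply: eq_bigr => s _; rewrite islast_tperm.
Qed.

Lemma islast_one (S : {set 'I_n}) (a : 'I_n) (s : {perm 'I_n}) : a \in S ->
  (\sum_(c in S) islast S s c = 1)%N.
Proof.
move=> aS.
have [k kS kmax] := arg_maxnP (fun c : 'I_n => val ((s^-1)%g c)) aS.
have kl : islast S s k by apply/forall_inP => d dS; exact: kmax.
rewrite (bigD1 k) //= kl big1 // => c /andP[cS ck].
case cl0: (islast S s c) => //; move/forall_inP: cl0 => cl.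
have e : val ((s^-1)%g c) = val ((s^-1)%g k).
  apply/eqP; rewrite eqn_leq (cl k kS) andbT; exact: (kmax c cS).
by move: ck; rewrite (perm_inj (val_inj e)) eqxx.
Qed.

Lemma islast_count (S : {set 'I_n}) (a : 'I_n) : a \in S ->
  (#|S| * \sum_(s : {perm 'I_n}) islast S s a = #|{perm 'I_n}|)%N.
Proof.
move=> aS.
rewrite -sum_nat_const.
rewrite (eq_bigr (fun c => \sum_(s : {perm 'I_n}) islast S s c)); last first.
  by move=> c cS; rewrite (islast_same aS cS).
rewrite exchange_big /= -sum1_card.
by apply: eq_bigr => s _; rewrite (islast_one s aS).
Qed.

Lemma lev_le (c : nat) : (0 < LL)%N -> (lev c <= LL)%N = (c < 2 ^ LL)%N.
Proof.
rewrite /lev => L0; apply/idP/idP => h.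
  apply: leq_trans (trunc_log_ltn c (isT : (1 < 2)%N)) _; by rewrite leq_exp2l.
case: (posnP c) => [->|cp]; first by rewrite trunc_log0.
have := trunc_logP (isT : (1 < 2)%N) cp => h2.
by rewrite -(@ltn_exp2l 2) //; apply: leq_ltn_trans h2 h.
Qed.

Lemma okc_count (c : 'I_n) : (0 < LL)%N ->
  (2 ^ lev c * \sum_(s : {perm 'I_n}) okc s c)%N = if (c < 2 ^ LL)%N then #|{perm 'I_n}| else 0%N.
Proof.
move=> L0; rewrite /okc lev_le //; case: ifP => h /=.
  have cS : c \in Sj (lev c) by rewrite inE trunc_log_ltn.
  rewrite -(islast_count cS) card_Sj //.
  apply: leq_trans pow_LL; rewrite leq_exp2l // lev_le //.
by rewrite big1 ?muln0.
Qed.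

Lemma score_lb (s : {perm 'I_n}) : (\sum_(c : 'I_n) okc s c <= score Gs s)%N.
Proof.
rewrite /score -certn_perm; apply: play_lb.
  by rewrite map_inj_uniq ?enum_uniq //; exact: perm_inj.
by apply/allP => x _; rewrite inE.
Qed.

End Machine.

Local Open Scope ring_scope.

Lemma sum_lev (R : realType) L :
  (\sum_(0 <= k < 2 ^ L) ((2 ^ lev k)%:R : R)^-1 = (L.+1)%:R / 2)%R.
Proof.
elim: L => [|L IH].
  by rewrite expn0 big_nat1 /lev trunc_log0 expn1 div1r.
rewrite (@big_cat_nat _ _ _ (2 ^ L)) //=; last by rewrite leq_exp2l.
rewrite IH (@eq_big_nat _ _ _ (2 ^ L) (2 ^ L.+1) _ (fun _ => ((2 ^ L.+1)%:R : R)^-1)); last first.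
  move=> k /andP[h1 h2]; rewrite /lev (@trunc_log_eq 2 L k) //.
  by rewrite h1 h2.
rewrite sumr_const_nat expnS mul2n -addnn addnK.
have h2 : (2%:R : R) != 0 by rewrite pnatr_eq0.
have hL : ((2 ^ L)%:R : R) != 0 by rewrite pnatr_eq0 expn_eq0.
rewrite -mulr_natr natrD -[(L.+2)%N]addn1 natrD.
field.
by rewrite -natrD pnatr_eq0 addn_eq0 expn_eq0.
Qed.

Lemma exp_lb (R : realType) (n : nat) (hn : (0 < n)%N) : (0 < LL n)%N ->
  ((LL n).+1%:R / 2 : R) <= expected_score (R:=R) (Gs hn).
Proof.
move=> L0; rewrite /expected_score.
set N := #|{perm 'I_n}|.
have Npos : (0 < N)%N by apply/card_gt0P; exists 1%g.
rewrite ler_pdivlMr ?ltr0n //.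
have step : \sum_(s : {perm 'I_n}) ((\sum_(c : 'I_n) okc s c)%N)%:R
    <= \sum_(s : {perm 'I_n}) ((score (Gs hn) s)%:R : R).
  by apply: ler_sum => s _; rewrite ler_nat score_lb.
apply: le_trans _ step.
rewrite (eq_bigr (fun s => \sum_(c : 'I_n) ((okc s c)%:R : R))); last by move=> s _; rewrite natr_sum.
rewrite exchange_big /=.
have hc (c : 'I_n) : \sum_(s : {perm 'I_n}) ((okc s c)%:R : R) =
    if (c < 2 ^ LL n)%N then N%:R / ((2 ^ lev c)%:R) else 0.
  have := okc_count hn c L0; rewrite -natr_sum => /(congr1 (fun x => (x%:R : R))).
  rewrite natrM => e.
  have hp : ((2 ^ lev c)%:R : R) != 0 by rewrite pnatr_eq0 expn_eq0.
  apply: (mulfI hp); rewrite e; case: ifP => _ /=; last by rewrite mulr0.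
  by rewrite mulrC divfK.
rewrite (eq_bigr _ (fun c _ => hc c)) -big_mkcond /=.
rewrite -mulr_sumr.
have -> : \sum_(c < n | (c < 2 ^ LL n)%N) ((2 ^ lev c)%:R : R)^-1 =
          \sum_(0 <= k < 2 ^ LL n) ((2 ^ lev k)%:R : R)^-1.
  rewrite (big_nat_widen 0 (2 ^ LL n) n xpredT _ (pow_LL hn)) /=.
  by rewrite big_mkord.
by rewrite sum_lev mulrC.
Qed.

Theorem mainTheorem1 (R : realType) (n : nat) (hn : (0 < n)%N) :
  exists (m : nat) (G : guesser n m),
    (m%:R <= log2 (n%:R : R) ^+ 2 + log2 (n%:R : R)) /\
    (1 / 2) * log2 (n%:R : R) <= expected_score (R:=R) G.
Proof.
exists (mm n), (Gs hn).
have ln2 : 0 < ln (2 : R) by apply: ln_gt0; rewrite ltr1n.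
have npos : 0 < (n%:R : R) by rewrite ltr0n.
have hLlog : ((LL n)%:R : R) <= log2 (n%:R : R).
  rewrite /log2 ler_pdivlMr // mulrC mulr_natr -lnXn // ler_ln ?posrE ?exprn_gt0 //.
  by rewrite -natrX ler_nat pow_LL.
have hlog1 : log2 (n%:R : R) <= (LL n).+1%:R.
  rewrite /log2 ler_pdivrMr // mulrC mulr_natr -lnXn // ler_ln ?posrE ?exprn_gt0 //.
  by rewrite -natrX ler_nat ltnW // trunc_log_ltn.
have x0 : (0 : R) <= (LL n)%:R by rewrite ler0n.
split.
  rewrite /mm natrM -addn1 natrD; nra.
case: (posnP (LL n)) => [L0|Lp].
  have n1 : n = 1%N.
    have := trunc_log_ltn n (isT : (1 < 2)%N); rewrite -/(LL n) L0 expn1.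
    move=> h; move: hn h; clear; case: n => [|[|m]] // _; rewrite ltnS ltnS ltn0.
  have -> : log2 (n%:R : R) = 0 by rewrite /log2 n1 ln1 mul0r.
  rewrite mulr0 /expected_score; apply: divr_ge0; last exact: ler0n.
  by apply: sumr_ge0 => s _; exact: ler0n.
apply: le_trans (exp_lb R hn Lp).
rewrite -addn1 natrD in hlog1 *; lra.
Qed.
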